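(* Let $\lambda>0$. For every irrational $\alpha$, $\sigma^{\mathcal{H}}\setminus[-\lambda,\lambda]\neq\emptyset$.
   Context: $\mathbb{T}=\mathbb{R}/\mathbb{Z}$. For $\theta\in\mathbb{T}$, $n\in\mathbb{Z}$ put $v(\theta,n)=\cos2\pi((n-1)\alpha+\theta)$ if $n$ is odd and $v(\theta,n)=\cos 2\pi(n\alpha+\theta)$ if $n$ is even; $c(\theta,n)=\lambda$ if $n$ is odd and $c(\theta,n)=\cos2\pi(n\alpha+\theta)$ if $n$ is even. Let $\mathbb{T}_0=\{\theta:\cos 2\pi(n\alpha+\theta)\neq 0\ \forall n\}$ and for $\theta\in\mathbb{T}_0$ let $\mathcal{H}_\theta$ act on $\ell^2(\mathbb{Z})$ by $(\mathcal{H}_\theta u)(n)=c(\theta,n)u(n+1)+c(\theta,n-1)u(n-1)+v(\theta,n)u(n)$; $\sigma^{\mathcal{H}}$ denotes its spectrum, which is independent of $\theta$. *)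

(* Defs.v *)
From Stdlib Require Import Reals ZArith.
From Coquelicot Require Import Coquelicot.
Open Scope R_scope.

Definition irrational (a : R) : Prop :=
  forall (p q : Z), q <> 0%Z -> a * IZR q <> IZR p.

(* A point theta of T = R/Z is represented by a real; every quantity below
   depends on theta only modulo 1. *)
Definition v_pot (alpha theta : R) (n : Z) : R :=
  if Z.odd n then cos (2 * PI * (IZR (n - 1) * alpha + theta))
  else cos (2 * PI * (IZR n * alpha + theta)).

Definition c_hop (lam alpha theta : R) (n : Z) : R :=
  if Z.odd n then lam else cos (2 * PI * (IZR n * alpha + theta)).

Definition in_T0 (alpha theta : R) : Prop :=
  forall n : Z, cos (2 * PI * (IZR n * alpha + theta)) <> 0.

Definition Hop (lam alpha theta : R) (u : Z -> R) (n : Z) : R :=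
  c_hop lam alpha theta n * u (n + 1)%Z
  + c_hop lam alpha theta (n - 1)%Z * u (n - 1)%Z
  + v_pot alpha theta n * u n.

Definition l2Z (u : Z -> R) : Prop :=
  ex_series (fun k : nat => (u (Z.of_nat k)) ^ 2) /\
  ex_series (fun k : nat => (u (- Z.of_nat k)%Z) ^ 2).

(* E is in the spectrum of H_theta: H_theta - E is not a bijection of l^2(Z)
   onto itself (for a bounded operator this is equivalent to non-invertibility
   in B(l^2) by the bounded inverse theorem). *)
Definition in_spectrum (lam alpha theta E : R) : Prop :=
  ~ (forall f : Z -> R, l2Z f ->
       exists u : Z -> R, l2Z u /\
         (forall n, Hop lam alpha theta u n - E * u n = f n) /\
         (forall w : Z -> R, l2Z w ->
            (forall n, Hop lam alpha theta w n - E * w n = f n) ->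
            forall n, w n = u n)).

(* Main.v *)
Require Import Defs.
From Stdlib Require Import Reals ZArith Lia Lra Psatz Classical ClassicalEpsilon.
From Coquelicot Require Import Coquelicot.
Open Scope R_scope.

Lemma ex_series_bounded (a : nat -> R) (M : R) :
  (forall n, 0 <= a n) -> (forall N, sum_f_R0 a N <= M) -> ex_series a.
Proof.
  intros Hp Hb.
  assert (H : ex_finite_lim_seq (sum_n a)).
  { apply ex_finite_lim_seq_incr with M.
    - intro n. rewrite !sum_n_Reals. simpl. specialize (Hp (S n)). lra.
    - intro n. rewrite sum_n_Reals. apply Hb. }
  destruct H as [l Hl]. exists l. exact Hl.
Qed.

Lemma ex_series_bound (a : nat -> R) :
  (forall n, 0 <= a n) -> ex_series a -> exists M, forall N, sum_f_R0 a N <= M.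
Proof.
  intros Hp [l Hl]. exists l. intro N. rewrite <- sum_n_Reals.
  apply is_lim_seq_incr_compare. exact Hl.
  intro n. rewrite !sum_n_Reals. simpl. specialize (Hp (S n)). lra.
Qed.

Definition wsum (lo : Z) (k : nat) (f : Z -> R) : R :=
  sum_f_R0 (fun i => f (lo + Z.of_nat i)%Z) k.

Lemma wsum_S lo k f : wsum lo (S k) f = wsum lo k f + f (lo + Z.of_nat (S k))%Z.
Proof. reflexivity. Qed.

Lemma wsum_ext lo k f g :
  (forall n, (lo <= n <= lo + Z.of_nat k)%Z -> f n = g n) -> wsum lo k f = wsum lo k g.
Proof. intros H. unfold wsum. apply sum_eq. intros i Hi. apply H. lia. Qed.

Lemma wsum_lin lo k f g a c :
  wsum lo k (fun n => a * f n + c * g n) = a * wsum lo k f + c * wsum lo k g.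
Proof. induction k; [unfold wsum; simpl; ring|]. rewrite !wsum_S, IHk. ring. Qed.

Lemma wsum_lin3 lo k f g h a c e :
  wsum lo k (fun n => a * f n + c * g n + e * h n) = a * wsum lo k f + c * wsum lo k g + e * wsum lo k h.
Proof. induction k; [unfold wsum; simpl; ring|]. rewrite !wsum_S, IHk. ring. Qed.

Lemma wsum_zero lo k f : (forall n, (lo <= n <= lo + Z.of_nat k)%Z -> f n = 0) -> wsum lo k f = 0.
Proof.
  intros H. induction k.
  - unfold wsum; simpl. apply H. lia.
  - rewrite wsum_S, IHk, H; [ring|lia|]. intros; apply H; lia.
Qed.

Lemma wsum_le lo k f g :
  (forall n, (lo <= n <= lo + Z.of_nat k)%Z -> f n <= g n) -> wsum lo k f <= wsum lo k g.
Proof.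
  intros H. induction k.
  - unfold wsum; simpl. apply H. lia.
  - rewrite !wsum_S. assert (wsum lo k f <= wsum lo k g) by (apply IHk; intros; apply H; lia).
    assert (f (lo + Z.of_nat (S k))%Z <= g (lo + Z.of_nat (S k))%Z) by (apply H; lia). lra.
Qed.

Lemma wsum_nonneg lo k f :
  (forall n, (lo <= n <= lo + Z.of_nat k)%Z -> 0 <= f n) -> 0 <= wsum lo k f.
Proof.
  intros H. replace 0 with (wsum lo k (fun _ => 0)) by (apply wsum_zero; auto).
  apply wsum_le. exact H.
Qed.

Lemma wsum_split lo k1 k2 f :
  wsum lo (k1 + S k2) f = wsum lo k1 f + wsum (lo + Z.of_nat k1 + 1) k2 f.
Proof.
  induction k2.
  - replace (k1 + 1)%nat with (S k1) by lia. rewrite wsum_S. unfold wsum at 3; simpl.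
    f_equal. f_equal. lia.
  - replace (k1 + S (S k2))%nat with (S (k1 + S k2)) by lia. rewrite !wsum_S, IHk2.
    replace (lo + Z.of_nat (S (k1 + S k2)))%Z with (lo + Z.of_nat k1 + 1 + Z.of_nat (S k2))%Z by lia.
    ring.
Qed.

Lemma wsum_ext_right lo k m f :
  (forall n, (lo + Z.of_nat k < n <= lo + Z.of_nat (k + m))%Z -> f n = 0) ->
  wsum lo (k + m) f = wsum lo k f.
Proof.
  intros H. induction m.
  - rewrite Nat.add_0_r. reflexivity.
  - replace (k + S m)%nat with (S (k + m)) by lia. rewrite wsum_S, IHm, H. ring.
    lia. intros; apply H; lia.
Qed.

Lemma wsum_left1 lo k f : wsum (lo - 1) (S k) f = f (lo - 1)%Z + wsum lo k f.
Proof.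
  induction k.
  - unfold wsum; simpl. f_equal; [f_equal; lia|f_equal; lia].
  - rewrite wsum_S, IHk, wsum_S. replace (lo - 1 + Z.of_nat (S (S k)))%Z with (lo + Z.of_nat (S k))%Z by lia. ring.
Qed.

Lemma wsum_telescope lo k g :
  wsum lo k (fun n => g n - g (n - 1)%Z) = g (lo + Z.of_nat k)%Z - g (lo - 1)%Z.
Proof.
  induction k.
  - unfold wsum; simpl. replace (lo + 0)%Z with lo by lia. ring.
  - rewrite wsum_S, IHk. replace (lo + Z.of_nat (S k) - 1)%Z with (lo + Z.of_nat k)%Z by lia. ring.
Qed.

Lemma wsum_shift_up lo k f :
  wsum lo k (fun n => f (n + 1)%Z) = wsum lo k f - f lo + f (lo + Z.of_nat k + 1)%Z.
Proof.
  assert (H := wsum_telescope lo k (fun n => f (n + 1)%Z)). simpl in H.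
  assert (E : wsum lo k (fun n => f (n + 1)%Z - f (n - 1 + 1)%Z)
            = 1 * wsum lo k (fun n => f (n + 1)%Z) + (-1) * wsum lo k f).
  { rewrite <- wsum_lin. apply wsum_ext. intros n _. replace (n - 1 + 1)%Z with n by lia. ring. }
  rewrite E in H. replace (lo - 1 + 1)%Z with lo in H by lia. lra.
Qed.

Lemma wsum_shift_down lo k f :
  wsum lo k (fun n => f (n - 1)%Z) = wsum lo k f - f (lo + Z.of_nat k)%Z + f (lo - 1)%Z.
Proof.
  assert (H := wsum_telescope lo k f).
  assert (E : wsum lo k (fun n => f n - f (n - 1)%Z)
            = 1 * wsum lo k f + (-1) * wsum lo k (fun n => f (n - 1)%Z)).
  { rewrite <- wsum_lin. apply wsum_ext. intros n _. ring. }
  rewrite E in H. lra.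
Qed.
Definition Jop (b d : Z -> R) (u : Z -> R) (n : Z) : R :=
  b n * u (n + 1)%Z + b (n - 1)%Z * u (n - 1)%Z + d n * u n.

Definition nrm lo k (u : Z -> R) := wsum lo k (fun n => u n * u n).

Definition supp_in (u : Z -> R) (a c : Z) := forall n, (n < a \/ c < n)%Z -> u n = 0.

Lemma Jop_sym b d lo k x y :
  x (lo - 1)%Z = 0 -> y (lo - 1)%Z = 0 ->
  x (lo + Z.of_nat k + 1)%Z = 0 -> y (lo + Z.of_nat k + 1)%Z = 0 ->
  wsum lo k (fun n => Jop b d x n * y n) = wsum lo k (fun n => x n * Jop b d y n).
Proof.
  intros Hx1 Hy1 Hx2 Hy2.
  set (g := fun n => b n * (x (n + 1)%Z * y n - x n * y (n + 1)%Z)).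
  assert (H := wsum_telescope lo k g).
  assert (E : wsum lo k (fun n => g n - g (n - 1)%Z)
     = 1 * wsum lo k (fun n => Jop b d x n * y n) + (-1) * wsum lo k (fun n => x n * Jop b d y n)).
  { rewrite <- wsum_lin. apply wsum_ext. intros n _. unfold g, Jop.
    replace (n - 1 + 1)%Z with n by lia. ring. }
  assert (g (lo + Z.of_nat k)%Z = 0) by (unfold g; rewrite Hx2, Hy2; ring).
  assert (g (lo - 1)%Z = 0) by (unfold g; replace (lo - 1 + 1)%Z with lo by lia; rewrite Hx1, Hy1; ring).
  lra.
Qed.

Lemma prod_bound (b x y B : R) : Rabs b <= B -> b * x * y <= B / 2 * (x * x) + B / 2 * (y * y).
Proof.
  intros Hb.
  assert (H1 : b * x * y <= Rabs b * Rabs (x * y)).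
  { rewrite <- Rabs_mult. rewrite Rmult_assoc. apply Rle_abs. }
  assert (H2 : Rabs (x * y) <= (x * x + y * y) / 2).
  { rewrite Rabs_mult. pose proof (Rabs_pos x). pose proof (Rabs_pos y).
    assert (Ex : x * x = Rabs x * Rabs x) by (rewrite <- Rabs_mult; rewrite Rabs_right; [reflexivity|nra]).
    assert (Ey : y * y = Rabs y * Rabs y) by (rewrite <- Rabs_mult; rewrite Rabs_right; [reflexivity|nra]).
    rewrite Ex, Ey. set (p := Rabs x) in *. set (q := Rabs y) in *.
    assert (0 <= (p - q) * (p - q)) by (apply Rle_0_sqr). lra. }
  pose proof (Rabs_pos b). pose proof (Rabs_pos (x*y)).
  assert (Rabs b * Rabs (x * y) <= B * ((x * x + y * y) / 2)).
  { apply Rmult_le_compat; auto. }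
  lra.
Qed.

Lemma Q_bound b d B lo k x :
  (forall n, Rabs (b n) <= B) -> (forall n, Rabs (d n) <= B) ->
  x (lo - 1)%Z = 0 -> x (lo + Z.of_nat k + 1)%Z = 0 ->
  Rabs (wsum lo k (fun n => Jop b d x n * x n)) <= 3 * B * nrm lo k x.
Proof.
  intros Hb Hd H1 H2.
  assert (Hup : forall sg, sg = 1 \/ sg = -1 ->
     sg * wsum lo k (fun n => Jop b d x n * x n) <= 3 * B * nrm lo k x).
  { intros sg Hsg.
    assert (E1 : sg * wsum lo k (fun n => Jop b d x n * x n) <=
       wsum lo k (fun n => B / 2 * (x (n+1)%Z * x (n+1)%Z) + B / 2 * (x (n-1)%Z * x (n-1)%Z)
                           + 2 * B * (x n * x n))).
    { replace (sg * wsum lo k (fun n => Jop b d x n * x n)) with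
        (sg * wsum lo k (fun n => Jop b d x n * x n) + 0 * wsum lo k (fun n => 0)) by ring.
      rewrite <- wsum_lin. apply wsum_le. intros n _. unfold Jop.
      assert (Hz : forall z, Rabs z <= B -> Rabs (sg * z) <= B).
      { intros z Hz. rewrite Rabs_mult. destruct Hsg as [-> | ->]; rewrite ?Rabs_R1, ?Rabs_m1; lra. }
      pose proof (prod_bound (sg * b n) (x (n+1)%Z) (x n) B (Hz _ (Hb n))) as P1.
      pose proof (prod_bound (sg * b (n-1)%Z) (x (n-1)%Z) (x n) B (Hz _ (Hb _))) as P2.
      pose proof (prod_bound (sg * d n) (x n) (x n) B (Hz _ (Hd n))) as P3.
      lra. }
    assert (E2 : wsum lo k (fun n => B / 2 * (x (n+1)%Z * x (n+1)%Z) + B / 2 * (x (n-1)%Z * x (n-1)%Z)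
                           + 2 * B * (x n * x n))
        = B / 2 * wsum lo k (fun n => x (n+1)%Z * x (n+1)%Z)
          + B / 2 * wsum lo k (fun n => x (n-1)%Z * x (n-1)%Z) + 2 * B * nrm lo k x).
    { unfold nrm. exact (wsum_lin3 lo k (fun n => x (n+1)%Z * x (n+1)%Z) (fun n => x (n-1)%Z * x (n-1)%Z)
          (fun n => x n * x n) (B/2) (B/2) (2*B)). }
    rewrite wsum_shift_up with (f := fun n => x n * x n) in E2.
    rewrite wsum_shift_down with (f := fun n => x n * x n) in E2.
    fold (nrm lo k x) in E2. rewrite H1, H2 in E2.
    assert (0 <= B). { specialize (Hb lo). pose proof (Rabs_pos (b lo)). lra. }
    assert (x lo * x lo >= 0) by nra.
    assert (x (lo + Z.of_nat k)%Z * x (lo + Z.of_nat k)%Z >= 0) by nra.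
    nra. }
  apply Rabs_le. pose proof (Hup 1 (or_introl eq_refl)). pose proof (Hup (-1) (or_intror eq_refl)). lra.
Qed.

Definition Pset b d (N : Z) (r : R) : Prop :=
  exists N' k u, (N <= N')%Z /\ supp_in u N' (N' + Z.of_nat k) /\ 0 < nrm N' k u /\
     wsum N' k (fun n => Jop b d u n * u n) = r * nrm N' k u.

Lemma supp_edges u a k : supp_in u a (a + Z.of_nat k) -> u (a-1)%Z = 0 /\ u (a + Z.of_nat k + 1)%Z = 0.
Proof. intros H. split; apply H; lia. Qed.

Lemma nrm_nonneg lo k u : 0 <= nrm lo k u.
Proof. apply wsum_nonneg. intros. apply Rle_0_sqr. Qed.

Lemma lub_approx (P : R -> Prop) M δ : is_lub P M -> 0 < δ -> exists r, P r /\ M - δ < r.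
Proof.
  intros [Hu Hl] Hd. destruct (classic (exists r, P r /\ M - δ < r)) as [H|H]; auto.
  exfalso. assert (M <= M - δ); [|lra]. apply Hl. intros x Hx.
  destruct (Rle_or_lt x (M - δ)); auto. exfalso; apply H; eauto.
Qed.

Section PartA.
Variables (b d : Z -> R) (B m : R).
Hypothesis HB : 0 < B.
Hypothesis Hb : forall n, Rabs (b n) <= B.
Hypothesis Hd : forall n, Rabs (d n) <= B.
Hypothesis Htest : forall N, exists N' k u, (N <= N')%Z /\ supp_in u N' (N' + Z.of_nat k) /\
   0 < nrm N' k u /\ m * nrm N' k u <= wsum N' k (fun n => Jop b d u n * u n).

Lemma Pset_bound N r : Pset b d N r -> r <= 3 * B.
Proof.
  intros (N' & k & u & _ & Hs & Hp & HQ).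
  destruct (supp_edges _ _ _ Hs) as [E1 E2].
  pose proof (Q_bound b d B N' k u Hb Hd E1 E2) as H. rewrite HQ in H.
  pose proof (Rle_abs (r * nrm N' k u)).
  apply Rmult_le_reg_r with (nrm N' k u); lra.
Qed.

Lemma Pset_ne N : exists r, Pset b d N r /\ m <= r.
Proof.
  destruct (Htest N) as (N' & k & u & HN & Hs & Hp & HQ).
  exists (wsum N' k (fun n => Jop b d u n * u n) / nrm N' k u). split.
  - exists N', k, u. repeat split; auto. field. lra.
  - apply Rmult_le_reg_r with (nrm N' k u); auto. unfold Rdiv. rewrite Rmult_assoc, Rinv_l; lra.
Qed.

Lemma Pset_mono N N1 r : (N <= N1)%Z -> Pset b d N1 r -> Pset b d N r.
Proof. intros H (N' & k & u & HN & R). exists N', k, u. split; [lia|exact R]. Qed.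

Lemma partA : exists E, m <= E /\ forall N δ, 0 < δ -> exists N' k φ, (N <= N')%Z /\
   supp_in φ (N' + 1) (N' + Z.of_nat k - 1) /\ nrm N' k φ = 1 /\
   nrm N' k (fun n => Jop b d φ n - E * φ n) <= δ.
Proof.
  assert (Hbd : forall N, bound (Pset b d N)).
  { intro N. exists (3 * B). intros r Hr. eapply Pset_bound; eauto. }
  assert (Hne : forall N, exists r, Pset b d N r).
  { intro N. destruct (Pset_ne N) as [r [H _]]; eauto. }
  pose (M := fun N => proj1_sig (completeness (Pset b d N) (Hbd N) (Hne N))).
  assert (HM : forall N, is_lub (Pset b d N) (M N)).
  { intro N. unfold M. apply proj2_sig. }
  assert (M_ge : forall N, m <= M N).
  { intro N. destruct (Pset_ne N) as [r [Hr Hm]]. destruct (HM N) as [Hu _].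
    specialize (Hu r Hr). lra. }
  assert (M_le : forall N, M N <= 3 * B).
  { intro N. destruct (HM N) as [_ Hl]. apply Hl. intros r Hr. eapply Pset_bound; eauto. }
  assert (M_mono : forall N N1, (N <= N1)%Z -> M N1 <= M N).
  { intros N N1 H. destruct (HM N1) as [_ Hl]. apply Hl. intros r Hr.
    destruct (HM N) as [Hu _]. apply Hu. eapply Pset_mono; eauto. }
  assert (Hbd2 : bound (fun x => exists N, x = - M N)).
  { exists (- m). intros x [N ->]. specialize (M_ge N). lra. }
  assert (Hne2 : exists x, (fun x => exists N, x = - M N) x).
  { exists (- M 0%Z). exists 0%Z. reflexivity. }
  destruct (completeness _ Hbd2 Hne2) as [L HL].
  exists (- L).
  assert (E_le : forall N, - L <= M N).
  { intro N. destruct HL as [Hu _]. assert (- M N <= L) by (apply Hu; eauto). lra. }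
  split.
  { destruct HL as [_ Hl]. assert (L <= - m); [|lra]. apply Hl. intros x [N ->].
    specialize (M_ge N). lra. }
  set (E := - L).
  assert (E_approx : forall δ, 0 < δ -> exists N, M N < E + δ).
  { intros δ Hδ. destruct (lub_approx _ _ δ HL Hδ) as [x [[N ->] Hx]]. exists N. unfold E. lra. }
  intros N δ Hδ.
  set (δ' := Rmin 1 (δ / (24 * B + 2))).
  assert (Hδ'0 : 0 < δ').
  { unfold δ'. apply Rmin_pos; [lra|]. apply Rdiv_lt_0_compat; lra. }
  assert (Hδ'1 : δ' <= 1) by apply Rmin_l.
  assert (Hδ'2 : δ' <= δ / (24 * B + 2)) by apply Rmin_r.
  destruct (E_approx δ' Hδ'0) as [N1 HN1].
  set (N2 := Z.max N N1).
  assert (HM2 : M N2 < E + δ') by (pose proof (M_mono N1 N2 ltac:(lia)); lra).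
  set (M2 := M N2) in *.
  destruct (lub_approx _ _ δ' (HM (N2 + 1)%Z) Hδ'0) as [r [Hr Hrl]].
  pose proof (E_le (N2 + 1)%Z). fold E in H.
  destruct Hr as (N' & k & u & HN' & Hs & Hpos & HQ).
  set (lo := (N' - 1)%Z). set (K := S (S k)).
  assert (Hu0 : forall n, (n < N' \/ N' + Z.of_nat k < n)%Z -> u n = 0) by exact Hs.
  assert (Wch : forall f : Z -> R, f (N' - 1)%Z = 0 -> f (N' + Z.of_nat k + 1)%Z = 0 ->
             wsum lo K f = wsum N' k f).
  { intros f F1 F2. unfold lo, K. rewrite wsum_S, wsum_left1, F1.
    replace (N' - 1 + Z.of_nat (S (S k)))%Z with (N' + Z.of_nat k + 1)%Z by lia. rewrite F2. ring. }
  set (n0 := nrm N' k u) in *.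
  assert (Hn0 : nrm lo K u = n0).
  { unfold nrm. apply Wch; rewrite Hu0 by lia; ring. }
  assert (HQ0 : wsum lo K (fun n => Jop b d u n * u n) = r * n0).
  { rewrite <- HQ. apply Wch; rewrite Hu0 by lia; ring. }
  set (P := fun (z : Z -> R) n => M2 * z n - Jop b d z n).
  set (y := P u).
  assert (Hy0 : forall n, (n < lo \/ lo + Z.of_nat K < n)%Z -> y n = 0).
  { intros n Hn. unfold y, P, Jop. unfold lo, K in Hn.
    rewrite (Hu0 n), (Hu0 (n+1)%Z), (Hu0 (n-1)%Z) by lia. ring. }
  assert (Hsupp_big : forall z, (forall n, (n < N' - 1 \/ N' + Z.of_nat k + 1 < n)%Z -> z n = 0) ->
             supp_in z lo (lo + Z.of_nat K)).
  { intros z Hz n Hn. apply Hz. unfold lo, K in Hn. lia. }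
  assert (Pform : forall z, wsum lo K (fun n => P z n * z n) =
                 M2 * nrm lo K z + (-1) * wsum lo K (fun n => Jop b d z n * z n)).
  { intros z. unfold nrm. rewrite <- wsum_lin. apply wsum_ext. intros. unfold P. ring. }
  assert (Ppos : forall z, supp_in z lo (lo + Z.of_nat K) -> 0 <= wsum lo K (fun n => P z n * z n)).
  { intros z Hz. rewrite Pform. destruct (supp_edges _ _ _ Hz) as [Z1 Z2].
    pose proof (Q_bound b d B lo K z Hb Hd Z1 Z2) as QB.
    pose proof (nrm_nonneg lo K z) as NN.
    destruct (Rle_lt_or_eq_dec 0 (nrm lo K z) NN) as [Hp|Hp].
    - set (Qz := wsum lo K (fun n => Jop b d z n * z n)) in *.
      assert (HP : Pset b d N2 (Qz / nrm lo K z)).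
      { exists lo, K, z. split; [unfold lo, N2 in *; lia|]. split; [exact Hz|]. split; [exact Hp|].
        unfold Qz. field. lra. }
      destruct (HM N2) as [Hu _]. specialize (Hu _ HP). fold M2 in Hu.
      assert (Qz <= M2 * nrm lo K z).
      { replace Qz with (Qz / nrm lo K z * nrm lo K z) by (field; lra).
        apply Rmult_le_compat_r; lra. }
      lra.
    - rewrite <- Hp in *. pose proof (Rle_abs (wsum lo K (fun n => Jop b d z n * z n))). lra. }
  set (t := - / (6 * B)).
  set (z := fun n => u n + t * y n).
  assert (Hz : supp_in z lo (lo + Z.of_nat K)).
  { intros n Hn. unfold z. rewrite Hy0 by auto. unfold lo, K in Hn. rewrite Hu0 by lia. ring. }
  specialize (Ppos z Hz).
  set (A := wsum lo K (fun n => P u n * u n)).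
  set (p := nrm lo K y).
  set (C := wsum lo K (fun n => P y n * y n)).
  assert (Hexp : wsum lo K (fun n => P z n * z n) = A + 2 * t * p + t * t * C).
  { assert (E1 : wsum lo K (fun n => P z n * z n) =
       1 * A + t * wsum lo K (fun n => P u n * y n + P y n * u n) + (t * t) * C).
    { unfold A, C. rewrite <- wsum_lin3. apply wsum_ext. intros n _.
      unfold z, P, Jop. ring. }
    rewrite E1.
    assert (E2 : wsum lo K (fun n => P u n * y n + P y n * u n) =
                 1 * wsum lo K (fun n => P u n * y n) + 1 * wsum lo K (fun n => P y n * u n)).
    { rewrite <- wsum_lin. apply wsum_ext. intros; ring. }
    assert (E3 : wsum lo K (fun n => P y n * u n) = wsum lo K (fun n => P u n * y n)).
    { assert (S1 : wsum lo K (fun n => Jop b d y n * u n) = wsum lo K (fun n => y n * Jop b d u n)).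
      { apply Jop_sym; [apply Hy0; lia| rewrite Hu0 by (unfold lo; lia); auto
                       | apply Hy0; lia | rewrite Hu0 by (unfold lo, K; lia); auto]. }
      assert (F1 : wsum lo K (fun n => P y n * u n) = M2 * wsum lo K (fun n => y n * u n)
                  + (-1) * wsum lo K (fun n => Jop b d y n * u n)).
      { rewrite <- wsum_lin. apply wsum_ext. intros; unfold P; ring. }
      assert (F2 : wsum lo K (fun n => P u n * y n) = M2 * wsum lo K (fun n => y n * u n)
                  + (-1) * wsum lo K (fun n => y n * Jop b d u n)).
      { rewrite <- wsum_lin. apply wsum_ext. intros; unfold P; fold y; ring. }
      rewrite F1, F2, S1. reflexivity. }
    rewrite E2, E3. unfold p, nrm. fold y. ring. }
  rewrite Hexp in Ppos.
  assert (Hp0 : 0 <= p) by apply nrm_nonneg.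
  assert (HC : C <= 6 * B * p).
  { unfold C. rewrite Pform. fold p.
    assert (Y1 : y (lo - 1)%Z = 0) by (apply Hy0; lia).
    assert (Y2 : y (lo + Z.of_nat K + 1)%Z = 0) by (apply Hy0; lia).
    pose proof (Q_bound b d B lo K y Hb Hd Y1 Y2) as QB. fold p in QB.
    pose proof (Rle_abs (- wsum lo K (fun n => Jop b d y n * y n))). rewrite Rabs_Ropp in H0.
    specialize (M_le N2). fold M2 in M_le.
    assert (M2 * p <= 3 * B * p) by (apply Rmult_le_compat_r; lra). lra. }
  assert (HA : A <= 2 * δ' * n0).
  { unfold A. rewrite Pform, Hn0, HQ0. assert (0 < n0) by exact Hpos.
    assert ((M2 - r) * n0 <= (2 * δ') * n0) by (apply Rmult_le_compat_r; lra). lra. }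
  assert (Hpp : p <= 6 * B * A).
  { assert (T1 : t * t * C <= t * t * (6 * B * p)).
    { apply Rmult_le_compat_l; [apply Rle_0_sqr | exact HC]. }
    assert (T2 : t * t * (6 * B * p) = p / (6 * B)) by (unfold t; field; lra).
    assert (T3 : 2 * t * p = - (2 * (p / (6 * B)))) by (unfold t; field; lra).
    assert (p / (6 * B) <= A) by lra.
    replace p with (6 * B * (p / (6 * B))) by (field; lra).
    apply Rmult_le_compat_l; lra. }
  set (T := fun n => Jop b d u n - E * u n).
  assert (HT : nrm lo K T <= δ * n0).
  { assert (T4 : nrm lo K T <= 2 * p + 2 * ((M2 - E) * (M2 - E)) * n0).
    { rewrite <- Hn0. unfold p, nrm. rewrite <- wsum_lin. apply wsum_le. intros n _.
      unfold T. replace (Jop b d u n - E * u n) with (- y n + (M2 - E) * u n)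
        by (unfold y, P; ring).
      assert (0 <= (y n + (M2 - E) * u n) * (y n + (M2 - E) * u n)) by apply Rle_0_sqr. nra. }
    assert (0 <= M2 - E) by (unfold M2; specialize (E_le N2); unfold E; lra).
    assert ((M2 - E) * (M2 - E) <= δ' * δ') by (apply Rmult_le_compat; lra).
    assert (δ' * δ' <= δ') by nra.
    assert (0 < n0) by exact Hpos.
    assert ((24 * B + 2) * δ' <= δ).
    { replace δ with ((24 * B + 2) * (δ / (24 * B + 2))) by (field; lra).
      apply Rmult_le_compat_l; lra. }
    assert (p <= 12 * B * δ' * n0) by nra.
    assert (((M2 - E) * (M2 - E)) * n0 <= δ' * n0) by (apply Rmult_le_compat_r; lra).
    nra. }
  set (c := / sqrt n0).
  assert (Hc : c * c * n0 = 1).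
  { unfold c. assert (0 < sqrt n0) by (apply sqrt_lt_R0; exact Hpos).
    rewrite <- (sqrt_sqrt n0) at 3 by lra. field. lra. }
  exists lo, K, (fun n => c * u n). split; [|split; [|split]].
  - unfold lo. lia.
  - intros n Hn. rewrite Hu0; [ring|]. unfold lo, K in Hn. lia.
  - unfold nrm. rewrite <- Hc, <- Hn0. unfold nrm.
    replace (c * c * wsum lo K (fun n => u n * u n)) with
      (c * c * wsum lo K (fun n => u n * u n) + 0 * wsum lo K (fun n => 0)) by ring.
    rewrite <- wsum_lin. apply wsum_ext. intros; ring.
  - assert (nrm lo K (fun n => Jop b d (fun n0 => c * u n0) n - E * (c * u n)) = c * c * nrm lo K T).
    { unfold nrm. replace (c * c * wsum lo K (fun n => T n * T n)) with
      (c * c * wsum lo K (fun n => T n * T n) + 0 * wsum lo K (fun n => 0)) by ring.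
      rewrite <- wsum_lin. apply wsum_ext. intros. unfold T, Jop. ring. }
    rewrite H0. assert (0 <= c * c) by apply Rle_0_sqr.
    assert (c * c * nrm lo K T <= c * c * (δ * n0)) by (apply Rmult_le_compat_l; auto).
    replace (c * c * (δ * n0)) with (δ * (c * c * n0)) in H2 by ring. rewrite Hc in H2. lra.
Qed.
End PartA.

Lemma sum_zero (A : nat -> R) K : (forall i, (i <= K)%nat -> A i = 0) -> sum_f_R0 A K = 0.
Proof.
  intros H. rewrite (sum_eq A (fun _ => 0)) by auto. rewrite sum_cte. ring.
Qed.

Lemma sum_single (A : nat -> R) K j :
  (forall i, i <> j -> A i = 0) -> ((j <= K)%nat \/ A j = 0) -> sum_f_R0 A K = A j.
Proof.
  intros H Hj. induction K.
  - destruct j; [reflexivity|]. simpl. rewrite H by lia. destruct Hj; [lia|auto].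
  - simpl. destruct (Nat.eq_dec j (S K)) as [->|Hne].
    + rewrite sum_zero; [ring|]. intros; apply H; lia.
    + rewrite (H (S K)) by lia. rewrite IHK; [ring|]. destruct Hj; [left; lia|auto].
Qed.

Lemma l2Z_ext u w : (forall n, u n = w n) -> l2Z u -> l2Z w.
Proof.
  intros H [H1 H2]. split.
  - refine (ex_series_ext _ _ _ H1). intro k. simpl. rewrite H. reflexivity.
  - refine (ex_series_ext _ _ _ H2). intro k. simpl. rewrite H. reflexivity.
Qed.

Lemma ex_series_lin3 (a b c : nat -> R) (x y z : R) :
  ex_series (fun k => a k ^ 2) -> ex_series (fun k => b k ^ 2) -> ex_series (fun k => c k ^ 2) ->
  ex_series (fun k => (x * a k + y * b k + z * c k) ^ 2).
Proof.
  intros Ha Hb Hc.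
  apply (@ex_series_le R_AbsRing R_CompleteNormedModule _ (fun k => 3 * (x * x) * a k ^ 2 + 3 * (y * y) * b k ^ 2 + 3 * (z * z) * c k ^ 2)).
  - intro n. change (norm ((x * a n + y * b n + z * c n) ^ 2)) with (Rabs ((x * a n + y * b n + z * c n) ^ 2)).
    rewrite Rabs_right by (apply Rle_ge; apply pow2_ge_0).
    assert (0 <= (x * a n - y * b n) ^ 2) by apply pow2_ge_0.
    assert (0 <= (x * a n - z * c n) ^ 2) by apply pow2_ge_0.
    assert (0 <= (y * b n - z * c n) ^ 2) by apply pow2_ge_0.
    nra.
  - apply (ex_series_plus (fun k => 3 * (x * x) * a k ^ 2 + 3 * (y * y) * b k ^ 2) _).
    apply (ex_series_plus (fun k => 3 * (x * x) * a k ^ 2) _).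
    + apply (ex_series_scal (3 * (x * x)) _ Ha).
    + apply (ex_series_scal (3 * (y * y)) _ Hb).
    + apply (ex_series_scal (3 * (z * z)) _ Hc).
Qed.

Lemma l2Z_lin3 u v w x y z : l2Z u -> l2Z v -> l2Z w -> l2Z (fun n => x * u n + y * v n + z * w n).
Proof.
  intros [U1 U2] [V1 V2] [W1 W2]. split.
  - apply (ex_series_lin3 (fun k => u (Z.of_nat k)) (fun k => v (Z.of_nat k)) (fun k => w (Z.of_nat k))); auto.
  - apply (ex_series_lin3 (fun k => u (- Z.of_nat k)%Z) (fun k => v (- Z.of_nat k)%Z) (fun k => w (- Z.of_nat k)%Z)); auto.
Qed.

Lemma sq3_pos a b c : a <> 0 \/ b <> 0 \/ c <> 0 -> 0 < a * a + b * b + c * c.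
Proof.
  intros H. pose proof (Rle_0_sqr a). pose proof (Rle_0_sqr b). pose proof (Rle_0_sqr c).
  unfold Rsqr in *.
  destruct H as [H|[H|H]]; pose proof (Rsqr_pos_lt _ H); unfold Rsqr in *; lra.
Qed.

Lemma three_dep x0 y0 x1 y1 x2 y2 : exists b0 b1 b2,
  0 < b0 * b0 + b1 * b1 + b2 * b2 /\ b0 * x0 + b1 * x1 + b2 * x2 = 0 /\ b0 * y0 + b1 * y1 + b2 * y2 = 0.
Proof.
  destruct (Req_dec (x1 * y2 - x2 * y1) 0) as [D0|D0];
  [destruct (Req_dec (x2 * y0 - x0 * y2) 0) as [D1|D1];
   [destruct (Req_dec (x0 * y1 - x1 * y0) 0) as [D2|D2]|]|].
  - destruct (Req_dec x0 0) as [X0|X0].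
    + destruct (Req_dec y0 0) as [Y0|Y0].
      * exists 1, 0, 0. subst. repeat split; lra.
      * exists y1, (- y0), 0. split; [apply sq3_pos; right; left; intro; apply Y0; lra|]. subst. split; nra.
    + exists x1, (- x0), 0. split; [apply sq3_pos; right; left; intro; apply X0; lra|]. split; nra.
  - exists (x1 * y2 - x2 * y1), (x2 * y0 - x0 * y2), (x0 * y1 - x1 * y0). split; [apply sq3_pos; tauto|]. split; ring.
  - exists (x1 * y2 - x2 * y1), (x2 * y0 - x0 * y2), (x0 * y1 - x1 * y0). split; [apply sq3_pos; tauto|]. split; ring.
  - exists (x1 * y2 - x2 * y1), (x2 * y0 - x0 * y2), (x0 * y1 - x1 * y0). split; [apply sq3_pos; tauto|]. split; ring.
Qed.

Lemma kernel_zero b d E psi : (forall n, b n <> 0) ->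
  (forall n, Jop b d psi n - E * psi n = 0) -> psi 0%Z = 0 -> psi 1%Z = 0 -> forall n, psi n = 0.
Proof.
  intros Hb H H0 H1.
  assert (F : forall k : nat, psi (Z.of_nat k) = 0 /\ psi (Z.of_nat k + 1)%Z = 0).
  { induction k as [|k [IH1 IH2]]; [split; auto|].
    split. { replace (Z.of_nat (S k)) with (Z.of_nat k + 1)%Z by lia. auto. }
    specialize (H (Z.of_nat k + 1)%Z). unfold Jop in H.
    replace (Z.of_nat k + 1 - 1)%Z with (Z.of_nat k) in H by lia.
    replace (Z.of_nat (S k) + 1)%Z with (Z.of_nat k + 1 + 1)%Z by lia.
    rewrite IH1, IH2 in H. specialize (Hb (Z.of_nat k + 1)%Z).
    apply (Rmult_eq_reg_l (b (Z.of_nat k + 1)%Z)); auto. lra. }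
  assert (G : forall k : nat, psi (- Z.of_nat k)%Z = 0 /\ psi (- Z.of_nat k + 1)%Z = 0).
  { induction k as [|k [IH1 IH2]]; [split; auto|].
    split.
    2: { replace (- Z.of_nat (S k) + 1)%Z with (- Z.of_nat k)%Z by lia. auto. }
    specialize (H (- Z.of_nat k)%Z). unfold Jop in H.
    replace (- Z.of_nat (S k))%Z with (- Z.of_nat k - 1)%Z by lia.
    rewrite IH1, IH2 in H. specialize (Hb (- Z.of_nat k - 1)%Z).
    apply (Rmult_eq_reg_l (b (- Z.of_nat k - 1)%Z)); auto. lra. }
  intro n. destruct (Z_le_gt_dec 0 n).
  - replace n with (Z.of_nat (Z.to_nat n)) by lia. apply F.
  - replace n with (- Z.of_nat (Z.to_nat (- n)))%Z by lia. apply G.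
Qed.

Fixpoint cls (n : nat) : nat :=
  match n with 0 => 0 | 1 => 1 | 2 => 2 | S (S (S m)) => cls m end%nat.

Lemma cls3 m : cls (3 * m) = 0%nat /\ cls (3 * m + 1) = 1%nat /\ cls (3 * m + 2) = 2%nat.
Proof.
  induction m; [simpl; auto|].
  replace (3 * S m)%nat with (S (S (S (3 * m)))) by lia.
  replace (S (S (S (3 * m))) + 1)%nat with (S (S (S (3 * m + 1)))) by lia.
  replace (S (S (S (3 * m))) + 2)%nat with (S (S (S (3 * m + 2)))) by lia.
  simpl. exact IHm.
Qed.

Definition chi (i j : nat) : R := if Nat.eqb (cls j) i then 1 else 0.

Lemma wsum_splitZ a c F : (0 <= a < c)%Z ->
  wsum 0 (Z.to_nat c) F = wsum 0 (Z.to_nat a) F + wsum (a + 1) (Z.to_nat (c - a - 1)) F.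
Proof.
  intros H. replace (Z.to_nat c) with (Z.to_nat a + S (Z.to_nat (c - a - 1)))%nat by lia.
  rewrite wsum_split. f_equal. f_equal. lia.
Qed.

Section PartC.
Variables (b d : Z -> R) (E : R).
Hypothesis Hbnz : forall n, b n <> 0.
Hypothesis HAE : forall N δ, 0 < δ -> exists N' k φ, (N <= N')%Z /\
   supp_in φ (N' + 1) (N' + Z.of_nat k - 1) /\ nrm N' k φ = 1 /\
   nrm N' k (fun n => Jop b d φ n - E * φ n) <= δ.

Definition blkP (N : Z) (j : nat) (p : Z * nat * (Z -> R)) : Prop :=
  (N <= fst (fst p))%Z /\ supp_in (snd p) (fst (fst p) + 1) (fst (fst p) + Z.of_nat (snd (fst p)) - 1) /\
  nrm (fst (fst p)) (snd (fst p)) (snd p) = 1 /\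
  nrm (fst (fst p)) (snd (fst p)) (fun n => Jop b d (snd p) n - E * snd p n) <= (/2) ^ j.

Lemma blk_ex N j : exists p, blkP N j p.
Proof.
  assert (Hp : 0 < (/2)^j) by (apply pow_lt; lra).
  destruct (HAE N ((/2)^j) Hp) as (N' & k & φ & H).
  exists (N', k, φ). exact H.
Qed.

Definition pick N j := proj1_sig (constructive_indefinite_description _ (blk_ex N j)).
Lemma pick_spec N j : blkP N j (pick N j).
Proof. unfold pick. apply proj2_sig. Qed.

Fixpoint st (j : nat) : Z := match j with 0 => 1%Z | S j' =>
  (fst (fst (pick (st j') j')) + Z.of_nat (snd (fst (pick (st j') j'))) + 2)%Z end.

Definition rr j := fst (fst (pick (st j) j)).
Definition kk j := snd (fst (pick (st j) j)).
Definition ph j := snd (pick (st j) j).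

Lemma rr_st j : (st j <= rr j)%Z.
Proof. exact (proj1 (pick_spec (st j) j)). Qed.
Lemma ph_supp j : supp_in (ph j) (rr j + 1) (rr j + Z.of_nat (kk j) - 1).
Proof. exact (proj1 (proj2 (pick_spec (st j) j))). Qed.
Lemma ph_nrm j : nrm (rr j) (kk j) (ph j) = 1.
Proof. exact (proj1 (proj2 (proj2 (pick_spec (st j) j)))). Qed.
Lemma ph_err j : nrm (rr j) (kk j) (fun n => Jop b d (ph j) n - E * ph j n) <= (/2) ^ j.
Proof. exact (proj2 (proj2 (proj2 (pick_spec (st j) j)))). Qed.

Lemma rr_next j : (rr j + Z.of_nat (kk j) + 2 <= rr (S j))%Z.
Proof. pose proof (rr_st (S j)) as H. change (st (S j)) with (rr j + Z.of_nat (kk j) + 2)%Z in H. exact H. Qed.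
Lemma rr0 : (1 <= rr 0)%Z.
Proof. pose proof (rr_st 0) as H. change (st 0) with 1%Z in H. exact H. Qed.
Lemma rr_mono i j : (i <= j)%nat -> (rr i <= rr j)%Z.
Proof.
  intros H. induction H; [lia|]. pose proof (rr_next m). lia.
Qed.
Lemma rr_ge j : (Z.of_nat j + 1 <= rr j)%Z.
Proof. induction j; [pose proof rr0; lia|]. pose proof (rr_next j). lia. Qed.

Lemma ph_nz j n : ph j n <> 0 -> (rr j + 1 <= n <= rr j + Z.of_nat (kk j) - 1)%Z.
Proof.
  intros H. destruct (Z_lt_le_dec n (rr j + 1)). { exfalso; apply H, ph_supp; lia. }
  destruct (Z_lt_le_dec (rr j + Z.of_nat (kk j) - 1) n). { exfalso; apply H, ph_supp; lia. }
  lia.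
Qed.

Definition uc (ch : nat -> R) (n : Z) : R := sum_f_R0 (fun i => ch i * ph i n) (Z.to_nat n).

Lemma uloc ch j n : (rr j - 1 <= n <= rr (S j))%Z -> uc ch n = ch j * ph j n.
Proof.
  intros Hn. unfold uc. apply (sum_single (fun i => ch i * ph i n)).
  - intros i Hi. destruct (Req_dec (ph i n) 0) as [->|Hz]; [ring|]. exfalso.
    apply ph_nz in Hz. destruct (Nat.lt_ge_cases i j).
    + pose proof (rr_mono (S i) j H). pose proof (rr_next i). lia.
    + assert (S j <= i)%nat by lia. pose proof (rr_mono _ _ H0). lia.
  - destruct (Req_dec (ph j n) 0) as [->|Hz]; [right; ring|]. left.
    apply ph_nz in Hz. pose proof (rr_ge j). lia.
Qed.

Lemma uzero ch n : (n <= rr 0)%Z -> uc ch n = 0.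
Proof.
  intros Hn. unfold uc. apply sum_zero. intros i _.
  destruct (Req_dec (ph i n) 0) as [->|Hz]; [ring|]. exfalso.
  apply ph_nz in Hz. pose proof (rr_mono 0 i ltac:(lia)). lia.
Qed.

Lemma floc ch j n : (rr j <= n <= rr (S j) - 1)%Z ->
  Jop b d (uc ch) n - E * uc ch n = ch j * (Jop b d (ph j) n - E * ph j n).
Proof.
  intros Hn. unfold Jop. rewrite !(uloc ch j) by lia. ring.
Qed.

Lemma fzero ch n : (n < rr 0)%Z -> Jop b d (uc ch) n - E * uc ch n = 0.
Proof. intros Hn. unfold Jop. rewrite !uzero by lia. ring. Qed.

Lemma tot_decomp F J :
  wsum 0 (Z.to_nat (rr (S J) - 1)) F = wsum 0 (Z.to_nat (rr 0 - 1)) F +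
    sum_f_R0 (fun j => wsum (rr j) (Z.to_nat (rr (S j) - 1 - rr j)) F) J.
Proof.
  induction J.
  - simpl. pose proof rr0. pose proof (rr_next 0).
    rewrite (wsum_splitZ (rr 0 - 1) (rr 1 - 1)) by lia. f_equal. f_equal; [lia|f_equal; lia].
  - rewrite tech5, <- Rplus_assoc, <- IHJ. pose proof rr0. pose proof (rr_next (S J)). pose proof (rr_mono 0 (S J) ltac:(lia)).
    rewrite (wsum_splitZ (rr (S J) - 1) (rr (S (S J)) - 1)) by lia. f_equal. f_equal; [lia|f_equal; lia].
Qed.

Lemma region F G j :
  (forall n, (rr j <= n <= rr (S j) - 1)%Z -> F n = G n) ->
  (forall n, (rr j + Z.of_nat (kk j) < n)%Z -> G n = 0) ->
  wsum (rr j) (Z.to_nat (rr (S j) - 1 - rr j)) F = wsum (rr j) (kk j) G.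
Proof.
  intros H1 H2. pose proof (rr_next j).
  rewrite (wsum_ext _ _ F G) by (intros; apply H1; lia).
  replace (Z.to_nat (rr (S j) - 1 - rr j)) with (kk j + (Z.to_nat (rr (S j) - 1 - rr j) - kk j))%nat by lia.
  apply wsum_ext_right. intros; apply H2; lia.
Qed.

Lemma f_l2 ch : (forall j, ch j * ch j <= 1) -> l2Z (fun n => Jop b d (uc ch) n - E * uc ch n).
Proof.
  intros Hch. set (f := fun n => Jop b d (uc ch) n - E * uc ch n).
  split.
  - apply ex_series_bounded with 2.
    + intros; apply pow2_ge_0.
    + intros N.
      assert (Es : sum_f_R0 (fun k => f (Z.of_nat k) ^ 2) N = wsum 0 N (fun n => f n * f n)).
      { unfold wsum. apply sum_eq. intros i _. simpl. ring. }
      rewrite Es. set (F := fun n => f n * f n).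
      assert (Fp : forall n, 0 <= F n) by (intros; apply Rle_0_sqr).
      assert (Hmono : wsum 0 N F <= wsum 0 (Z.to_nat (rr (S N) - 1)) F).
      { pose proof (rr_ge (S N)).
        destruct (Nat.eq_dec N (Z.to_nat (rr (S N) - 1))) as [<-|Hne]; [lra|].
        rewrite (wsum_splitZ (Z.of_nat N) (rr (S N) - 1)) by lia.
        rewrite Nat2Z.id. pose proof (wsum_nonneg (Z.of_nat N + 1) (Z.to_nat (rr (S N) - 1 - Z.of_nat N - 1)) F (fun n _ => Fp n)). lra. }
      rewrite tot_decomp in Hmono.
      rewrite (wsum_zero 0 (Z.to_nat (rr 0 - 1)) F) in Hmono.
      2: { intros n Hn. pose proof rr0. unfold F, f. rewrite fzero by lia. ring. }
      assert (Hs : sum_f_R0 (fun j => wsum (rr j) (Z.to_nat (rr (S j) - 1 - rr j)) F) N <= sum_f_R0 (fun j => (/2) ^ j) N).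
      { apply sum_Rle. intros j _.
        rewrite (region F (fun n => ch j * ch j * ((Jop b d (ph j) n - E * ph j n) * (Jop b d (ph j) n - E * ph j n)))).
        - replace (wsum (rr j) (kk j) (fun n => ch j * ch j * ((Jop b d (ph j) n - E * ph j n) * (Jop b d (ph j) n - E * ph j n))))
            with (ch j * ch j * nrm (rr j) (kk j) (fun n => Jop b d (ph j) n - E * ph j n) + 0 * wsum (rr j) (kk j) (fun _ => 0)).
          2: { unfold nrm. rewrite <- wsum_lin. apply wsum_ext. intros; ring. }
          pose proof (ph_err j). pose proof (nrm_nonneg (rr j) (kk j) (fun n => Jop b d (ph j) n - E * ph j n)).
          specialize (Hch j). assert (0 <= ch j * ch j) by apply Rle_0_sqr.
          assert (0 <= (/2)^j) by (apply pow_le; lra). nra.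
        - intros n Hn. unfold F, f. rewrite (floc ch j n Hn). ring.
        - intros n Hn. unfold Jop. rewrite !(ph_supp j) by lia. ring. }
      rewrite tech3 in Hs by lra.
      assert ((/2) ^ S N >= 0) by (apply Rle_ge, pow_le; lra).
      assert ((1 - (/2) ^ S N) / (1 - /2) <= 2).
      { replace ((1 - (/2) ^ S N) / (1 - /2)) with (2 * (1 - (/2) ^ S N)) by field. lra. }
      lra.
  - apply ex_series_bounded with 0.
    + intros; apply pow2_ge_0.
    + intros N. rewrite sum_zero; [lra|]. intros i _. unfold f. rewrite fzero by (pose proof rr0; lia). ring.
Qed.

Theorem partC : ~ (forall f, l2Z f -> exists u, l2Z u /\ forall n, Jop b d u n - E * u n = f n).
Proof.
  intros Hs.
  assert (Hchi : forall i j, chi i j * chi i j <= 1).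
  { intros i j. unfold chi. destruct (Nat.eqb (cls j) i); lra. }
  destruct (Hs _ (f_l2 (chi 0) (Hchi 0%nat))) as [w0 [W0 E0]].
  destruct (Hs _ (f_l2 (chi 1) (Hchi 1%nat))) as [w1 [W1 E1]].
  destruct (Hs _ (f_l2 (chi 2) (Hchi 2%nat))) as [w2 [W2 E2]].
  set (u0 := uc (chi 0)) in *. set (u1 := uc (chi 1)) in *. set (u2 := uc (chi 2)) in *.
  destruct (three_dep (u0 0%Z - w0 0%Z) (u0 1%Z - w0 1%Z) (u1 0%Z - w1 0%Z) (u1 1%Z - w1 1%Z)
                      (u2 0%Z - w2 0%Z) (u2 1%Z - w2 1%Z)) as (b0 & b1 & b2 & Hnz & Hx & Hy).
  set (psi := fun n => b0 * (u0 n - w0 n) + b1 * (u1 n - w1 n) + b2 * (u2 n - w2 n)).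
  assert (Hpsi : forall n, psi n = 0).
  { apply (kernel_zero b d E); auto.
    intros n. specialize (E0 n). specialize (E1 n). specialize (E2 n). simpl in E0, E1, E2.
    transitivity (b0 * ((Jop b d u0 n - E * u0 n) - (Jop b d w0 n - E * w0 n)) +
                  b1 * ((Jop b d u1 n - E * u1 n) - (Jop b d w1 n - E * w1 n)) +
                  b2 * ((Jop b d u2 n - E * u2 n) - (Jop b d w2 n - E * w2 n))).
    { unfold psi, Jop. ring. }
    rewrite E0, E1, E2. ring. }
  set (U := fun n => b0 * u0 n + b1 * u1 n + b2 * u2 n).
  assert (HU : l2Z U).
  { apply (l2Z_ext (fun n => b0 * w0 n + b1 * w1 n + b2 * w2 n)).
    - intros n. specialize (Hpsi n). unfold psi in Hpsi. unfold U. lra.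
    - apply l2Z_lin3; auto. }
  destruct HU as [HU _].
  destruct (ex_series_bound _ (fun n => pow2_ge_0 _) HU) as [Mb HMb].
  set (S3 := b0 * b0 + b1 * b1 + b2 * b2) in *.
  destruct (INR_unbounded (Mb / S3)) as [m Hm].
  set (F := fun n => U n * U n).
  set (g := fun j => b0 * chi 0 j + b1 * chi 1 j + b2 * chi 2 j).
  assert (Hreg : forall j, wsum (rr j) (Z.to_nat (rr (S j) - 1 - rr j)) F = g j * g j).
  { intros j. rewrite (region F (fun n => g j * g j * (ph j n * ph j n))).
    - transitivity (g j * g j * nrm (rr j) (kk j) (ph j) + 0 * wsum (rr j) (kk j) (fun _ => 0)).
      { unfold nrm. rewrite <- wsum_lin. apply wsum_ext. intros; ring. }
      rewrite ph_nrm; ring.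
    - intros n Hn. unfold F, U, u0, u1, u2, g. rewrite !(uloc _ j) by lia. ring.
    - intros n Hn. rewrite (ph_supp j) by lia. ring. }
  assert (Hg : forall m, sum_f_R0 (fun j => g j * g j) (3 * m + 2) = INR (S m) * S3).
  { induction m0.
    - simpl. unfold g, chi. simpl. unfold S3. ring.
    - replace (3 * S m0 + 2)%nat with (S (S (S (3 * m0 + 2)))) by lia.
      rewrite !tech5, IHm0.
      replace (S (3 * m0 + 2)) with (3 * S m0)%nat by lia.
      replace (S (3 * S m0)) with (3 * S m0 + 1)%nat by lia.
      replace (S (3 * S m0 + 1)) with (3 * S m0 + 2)%nat by lia.
      destruct (cls3 (S m0)) as (C0 & C1 & C2).
      unfold g, chi. rewrite C0, C1, C2. simpl Nat.eqb. rewrite (S_INR (S m0)). unfold S3. ring. }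
  set (J := (3 * m + 2)%nat).
  specialize (HMb (Z.to_nat (rr (S J) - 1))).
  assert (Es : sum_f_R0 (fun k => U (Z.of_nat k) ^ 2) (Z.to_nat (rr (S J) - 1)) = wsum 0 (Z.to_nat (rr (S J) - 1)) F).
  { unfold wsum. apply sum_eq. intros i _. unfold F. simpl. ring. }
  rewrite Es, tot_decomp in HMb.
  rewrite (sum_eq _ (fun j => g j * g j)) in HMb by (intros; apply Hreg).
  unfold J in HMb. rewrite Hg in HMb.
  pose proof (wsum_nonneg 0 (Z.to_nat (rr 0 - 1)) F (fun n _ => Rle_0_sqr (U n))).
  rewrite S_INR in HMb.
  assert (Mb < INR m * S3) by (apply (Rmult_lt_compat_r S3) in Hm; [|lra]; unfold Rdiv in Hm;
     rewrite Rmult_assoc, Rinv_l in Hm; lra).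
  lra.
Qed.
End PartC.

Section PartB.
Variables (lam alpha theta : R).
Hypothesis hlam : 0 < lam.
Hypothesis halpha : irrational alpha.

Definition aa (k : Z) := cos (2 * PI * (IZR (2 * k) * alpha + theta)).
Definition eta := Rabs (sin (4 * PI * alpha)) * Rabs (cos (2 * PI * alpha)).

Lemma pair_sum k : aa k + aa (k + 1) =
  2 * cos (2 * PI * (IZR (2 * k + 1) * alpha + theta)) * cos (2 * PI * alpha).
Proof.
  unfold aa. set (y := 2 * PI * (IZR (2 * k + 1) * alpha + theta)). set (g := 2 * PI * alpha).
  replace (2 * PI * (IZR (2 * k) * alpha + theta)) with (y - g)
    by (unfold y, g; rewrite ?plus_IZR, ?mult_IZR, ?plus_IZR, ?mult_IZR; ring).
  replace (2 * PI * (IZR (2 * (k + 1)) * alpha + theta)) with (y + g)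
    by (unfold y, g; rewrite ?plus_IZR, ?mult_IZR, ?plus_IZR, ?mult_IZR; ring).
  rewrite cos_minus, cos_plus. ring.
Qed.

Lemma sin_bound y g : Rabs (sin (2 * g)) <= Rabs (cos y) + Rabs (cos (y + 2 * g)).
Proof.
  replace (2 * g) with ((y + 2 * g) - y) at 1 by ring.
  rewrite sin_minus.
  eapply Rle_trans; [apply Rabs_triang|]. rewrite Rabs_Ropp, !Rabs_mult.
  pose proof (SIN_bound (y + 2 * g)). pose proof (SIN_bound y).
  assert (Rabs (sin (y + 2 * g)) <= 1) by (apply Rabs_le; lra).
  assert (Rabs (sin y) <= 1) by (apply Rabs_le; lra).
  pose proof (Rabs_pos (cos y)). pose proof (Rabs_pos (cos (y + 2 * g))).
  pose proof (Rabs_pos (sin y)). pose proof (Rabs_pos (sin (y + 2 * g))).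
  nra.
Qed.

Lemma eta_pos : 0 < eta.
Proof.
  assert (S0 : sin (4 * PI * alpha) <> 0).
  { intro H. apply sin_eq_0_0 in H. destruct H as [z Hz].
    apply (halpha z 4%Z); [lia|]. pose proof PI_RGT_0.
    apply (Rmult_eq_reg_r PI); [|lra]. rewrite <- Hz. ring. }
  assert (C0 : cos (2 * PI * alpha) <> 0).
  { intro H. apply S0. replace (4 * PI * alpha) with (2 * (2 * PI * alpha)) by ring.
    rewrite sin_2a, H. ring. }
  unfold eta. apply Rmult_lt_0_compat; apply Rabs_pos_lt; auto.
Qed.

Lemma good_pair k : Rabs (aa k + aa (k + 1)) >= eta \/ Rabs (aa (k + 1) + aa (k + 1 + 1)) >= eta.
Proof.
  rewrite !pair_sum. set (y := 2 * PI * (IZR (2 * k + 1) * alpha + theta)). set (g := 2 * PI * alpha).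
  replace (2 * PI * (IZR (2 * (k + 1) + 1) * alpha + theta)) with (y + 2 * g)
    by (unfold y, g; rewrite ?plus_IZR, ?mult_IZR, ?plus_IZR, ?mult_IZR; ring).
  pose proof (sin_bound y g). replace (2 * g) with (4 * PI * alpha) in H at 1 by (unfold g; ring).
  unfold eta. fold g.
  rewrite !Rabs_mult. rewrite (Rabs_right 2) by lra.
  pose proof (Rabs_pos (cos g)).
  destruct (Rle_lt_dec (Rabs (sin (4 * PI * alpha)) / 2) (Rabs (cos y))).
  - left. assert (Rabs (sin (4 * PI * alpha)) * Rabs (cos g) <= 2 * Rabs (cos y) * Rabs (cos g)); [|lra].
    apply Rmult_le_compat_r; lra.
  - right. assert (Rabs (sin (4 * PI * alpha)) * Rabs (cos g) <= 2 * Rabs (cos (y + 2 * g)) * Rabs (cos g)); [|lra].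
    apply Rmult_le_compat_r; lra.
Qed.

Lemma dichotomy : exists s, (s = 1 \/ s = -1) /\
  forall N, exists k, (N <= k)%Z /\ s * (aa k + aa (k + 1)) >= eta.
Proof.
  destruct (classic (forall N, exists k, (N <= k)%Z /\ aa k + aa (k + 1) >= eta)) as [H|H].
  - exists 1. split; [auto|]. intros N. destruct (H N) as [k [Hk Hk2]]. exists k. split; auto. lra.
  - apply not_all_ex_not in H. destruct H as [N0 HN0].
    assert (HN : forall k, (N0 <= k)%Z -> aa k + aa (k + 1) < eta).
    { intros k Hk. destruct (Rlt_or_le (aa k + aa (k + 1)) eta); auto. exfalso. apply HN0. exists k. split; auto. lra. }
    exists (-1). split; [auto|]. intros N.
    set (k0 := Z.max N N0).
    destruct (good_pair k0) as [G|G].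
    + exists k0. split; [lia|]. specialize (HN k0 ltac:(lia)).
      destruct (Rle_or_lt 0 (aa k0 + aa (k0 + 1))).
      * rewrite Rabs_right in G; lra.
      * rewrite Rabs_left in G; lra.
    + exists (k0 + 1)%Z. split; [lia|]. specialize (HN (k0 + 1)%Z ltac:(lia)).
      destruct (Rle_or_lt 0 (aa (k0 + 1) + aa (k0 + 1 + 1))).
      * rewrite Rabs_right in G; lra.
      * rewrite Rabs_left in G; lra.
Qed.

Definition bs (s : R) := fun n => s * c_hop lam alpha theta n.
Definition ds (s : R) := fun n => s * v_pot alpha theta n.

Lemma test_vec s k : (s = 1 \/ s = -1) -> s * (aa k + aa (k + 1)) >= eta ->
  exists u, supp_in u (2 * k + 1) (2 * k + 1 + Z.of_nat 1) /\ 0 < nrm (2 * k + 1) 1 u /\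
    (lam + eta / 2) * nrm (2 * k + 1) 1 u <= wsum (2 * k + 1) 1 (fun n => Jop (bs s) (ds s) u n * u n).
Proof.
  intros Hs Hk.
  set (u := fun n => if Z.eq_dec n (2 * k + 1) then 1 else if Z.eq_dec n (2 * k + 2) then s else 0).
  assert (U1 : u (2 * k + 1)%Z = 1) by (unfold u; destruct (Z.eq_dec _ _); [auto|lia]).
  assert (U2 : u (2 * k + 2)%Z = s) by (unfold u; destruct (Z.eq_dec _ _); [lia|]; destruct (Z.eq_dec _ _); [auto|lia]).
  assert (U0 : forall n, n <> (2 * k + 1)%Z -> n <> (2 * k + 2)%Z -> u n = 0).
  { intros n H1 H2. unfold u. destruct (Z.eq_dec _ _); [lia|]. destruct (Z.eq_dec _ _); [lia|auto]. }
  assert (Hs2 : s * s = 1) by (destruct Hs as [-> | ->]; ring).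
  assert (W : forall f, wsum (2 * k + 1) 1 f = f (2 * k + 1)%Z + f (2 * k + 2)%Z).
  { intros f. unfold wsum. simpl. f_equal; f_equal; lia. }
  exists u. split; [|split].
  - intros n Hn. apply U0; lia.
  - unfold nrm. rewrite W, U1, U2. lra.
  - unfold nrm. rewrite !W, U1, U2.
    assert (J1 : Jop (bs s) (ds s) u (2 * k + 1)%Z = s * (lam * s + aa k)).
    { unfold Jop, bs, ds. replace (2 * k + 1 + 1)%Z with (2 * k + 2)%Z by lia. rewrite U1, U2, (U0 (2 * k + 1 - 1)%Z) by lia.
      unfold c_hop, v_pot. rewrite Z.odd_odd. replace (2 * k + 1 - 1)%Z with (2 * k)%Z by lia. unfold aa. ring. }
    assert (J2 : Jop (bs s) (ds s) u (2 * k + 2)%Z = s * (lam + aa (k + 1) * s)).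
    { unfold Jop, bs, ds. replace (2 * k + 2 - 1)%Z with (2 * k + 1)%Z by lia. rewrite U1, U2, (U0 (2 * k + 2 + 1)%Z) by lia.
      unfold c_hop, v_pot. rewrite Z.odd_odd. replace (2 * k + 2)%Z with (2 * (k + 1))%Z by lia.
      rewrite Z.odd_even. unfold aa. ring. }
    rewrite J1, J2.
    replace (s * (lam * s + aa k) * 1 + s * (lam + aa (k + 1) * s) * s) with
      ((s * s) * (2 * lam) + s * (aa k + aa (k + 1)) + (s * s - 1) * (s * aa (k + 1))) by ring.
    rewrite Hs2. replace ((1 - 1) * (s * aa (k + 1))) with 0 by ring. lra.
Qed.

End PartB.

Theorem lemma3p3 (lam : R) (hlam : 0 < lam) (alpha : R) (halpha : irrational alpha)
  (theta : R) (htheta : in_T0 alpha theta) :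
  exists E : R, in_spectrum lam alpha theta E /\ ~ (-lam <= E <= lam).
Proof.
  destruct (dichotomy alpha theta) as [s [Hs Hgood]].
  pose proof (eta_pos alpha halpha) as Heta.
  assert (Hs2 : s * s = 1) by (destruct Hs as [-> | ->]; ring).
  assert (Habs : forall x, Rabs (s * x) = Rabs x).
  { intros x. rewrite Rabs_mult. destruct Hs as [-> | ->]; rewrite ?Rabs_R1, ?Rabs_m1; ring. }
  assert (HB : 0 < lam + 1) by lra.
  assert (Hb : forall n, Rabs (bs lam alpha theta s n) <= lam + 1).
  { intros n. unfold bs. rewrite Habs. unfold c_hop. destruct (Z.odd n).
    - rewrite Rabs_right; lra.
    - pose proof (COS_bound (2 * PI * (IZR n * alpha + theta))). apply Rabs_le. lra. }
  assert (Hd : forall n, Rabs (ds alpha theta s n) <= lam + 1).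
  { intros n. unfold ds. rewrite Habs. unfold v_pot. destruct (Z.odd n).
    - pose proof (COS_bound (2 * PI * (IZR (n - 1) * alpha + theta))). apply Rabs_le. lra.
    - pose proof (COS_bound (2 * PI * (IZR n * alpha + theta))). apply Rabs_le. lra. }
  destruct (partA (bs lam alpha theta s) (ds alpha theta s) (lam + 1) (lam + eta alpha / 2) HB Hb Hd)
    as [E' [HE' HAE]].
  { intros N. destruct (Hgood (Z.abs N)) as [k [Hk Hk2]].
    destruct (test_vec lam alpha theta s k Hs Hk2) as [u [U1 [U2 U3]]].
    exists (2 * k + 1)%Z, 1%nat, u. split; [lia|]. auto. }
  exists (s * E'). split.
  - intro Hbij. apply (partC (c_hop lam alpha theta) (v_pot alpha theta) (s * E')).
    + intros n. unfold c_hop. destruct (Z.odd n); [lra|]. apply htheta.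
    + intros N δ Hδ. destruct (HAE N δ Hδ) as (N' & k & φ & H1 & H2 & H3 & H4).
      exists N', k, φ. split; [auto|]. split; [auto|]. split; [auto|].
      eapply Rle_trans; [|exact H4]. right. unfold nrm. apply wsum_ext. intros n _.
      unfold Jop, bs, ds.
      transitivity ((s * s) * ((c_hop lam alpha theta n * φ (n + 1)%Z + c_hop lam alpha theta (n - 1)%Z * φ (n - 1)%Z +
         v_pot alpha theta n * φ n - s * E' * φ n) * (c_hop lam alpha theta n * φ (n + 1)%Z + c_hop lam alpha theta (n - 1)%Z * φ (n - 1)%Z +
         v_pot alpha theta n * φ n - s * E' * φ n))).
      { rewrite Hs2. ring. }
      set (X := c_hop lam alpha theta n * φ (n + 1)%Z + c_hop lam alpha theta (n - 1)%Z * φ (n - 1)%Z + v_pot alpha theta n * φ n).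
      transitivity ((s * X - (s * s) * E' * φ n) * (s * X - (s * s) * E' * φ n)); [ring|].
      rewrite Hs2. unfold X. ring.
    + intros f Hf. destruct (Hbij f Hf) as [u [Hu [Heq _]]]. exists u. split; auto.
  - intros [H1 H2]. destruct Hs as [-> | ->]; lra.
Qed.
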